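(* Let $r\ge 1$ and let $G$ be a connected $r$-regular graph. Then $G$ has a strong clique of size two if and only if $G$ is isomorphic to the complete bipartite graph $K_{r,r}$.
   Context: A clique is strong if it intersects every maximal (inclusion-wise) independent set of the graph. *)

(* Defs.v *)
From mathcomp Require Import all_boot.
Set Implicit Arguments. Unset Strict Implicit. Unset Printing Implicit Defensive.

Definition simple_graph (T : finType) (e : rel T) : Prop :=
  symmetric e /\ irreflexive e.

Definition connected_graph (T : finType) (e : rel T) : Prop :=
  forall x y : T, connect e x y.

Definition regular (T : finType) (e : rel T) (r : nat) : Prop :=
  forall x : T, #|[set y | e x y]| = r.

Definition independent (T : finType) (e : rel T) (A : {set T}) : bool :=
  [forall x in A, forall y in A, ~~ e x y].

Definition max_independent (T : finType) (e : rel T) (A : {set T}) : bool :=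
  maxset (independent e) A.

Definition clique (T : finType) (e : rel T) (C : {set T}) : bool :=
  [forall x in C, forall y in C, (x != y) ==> e x y].

Definition strong_clique (T : finType) (e : rel T) (C : {set T}) : Prop :=
  clique e C /\ forall I : {set T}, max_independent e I -> C :&: I != set0.

Definition Kbip_rel (r : nat) : rel ('I_r + 'I_r) :=
  fun u v => match u, v with
             | inl _, inr _ | inr _, inl _ => true
             | _, _ => false
             end.

Definition graph_iso (T U : finType) (e : rel T) (f : rel U) : Prop :=
  exists phi : T -> U, bijective phi /\ forall x y, f (phi x) (phi y) = e x y.

(* Main.v *)
Require Import Defs.
From mathcomp Require Import all_boot.

Lemma indepP {T : finType} {e : rel T} {I : {set T}} {x y} :
  independent e I -> x \in I -> y \in I -> e x y = false.
Proof.
move=> /forallP /(_ x) /implyP H xI yI.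
by move: (H xI) => /forallP /(_ y) /implyP /(_ yI) /negbTE.
Qed.

Lemma keyK {T : finType} {e : rel T} {u v a b} :
  simple_graph e -> strong_clique e [set u; v] ->
  e u a -> a != v -> e v b -> b != u -> (a != b) && e a b.
Proof.
move=> [sym irr] [_ st] ua av vb bu.
apply/negPn/negP => /negP H.
have indI : independent e [set a; b].
  apply/forallP => x; apply/implyP => xI; apply/forallP => y; apply/implyP => yI.
  move: xI yI; rewrite !inE => /orP[]/eqP-> /orP[]/eqP->; rewrite ?irr //.
  - by apply/negP=> ab; apply: H; rewrite ab andbT; apply/eqP => E; rewrite E irr in ab.
  - by rewrite sym; apply/negP=> ab; apply: H; rewrite ab andbT; apply/eqP => E; rewrite E irr in ab.
have [I mI sub] := maxset_exists indI.
have := st I mI; have indJ : independent e I by move/maxsetP: mI => [].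
have aI : a \in I by apply: (subsetP sub); rewrite !inE eqxx.
have bI : b \in I by apply: (subsetP sub); rewrite !inE eqxx orbT.
case/set0Pn => x; rewrite !inE => /andP[/orP[]/eqP-> xI].
- by rewrite (indepP indJ xI aI) in ua.
- by rewrite (indepP indJ xI bI) in vb.
Qed.

Lemma nbrL {T : finType} {e : rel T} {r u v x} :
  simple_graph e -> regular e r -> strong_clique e [set u; v] -> e u v ->
  e u x -> [set y | e x y] = [set y | e v y].
Proof.
move=> [sym irr] reg sc uv ux.
apply/esym/eqP; rewrite eqEcard !reg leqnn andbT; apply/subsetP => b.
rewrite !inE => vb.
have [->|bu] := eqVneq b u; first by rewrite sym.
have [xv|xv] := eqVneq x v; first by rewrite xv.
by case/andP: (keyK (conj sym irr) sc ux xv vb bu).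
Qed.

Lemma structure (T : finType) (e : rel T) r u v :
  simple_graph e -> connected_graph e -> regular e r ->
  strong_clique e [set u; v] -> e u v ->
  forall x y, e x y = (e u x != e u y).
Proof.
move=> sg con reg sc uv; have [sym irr] := sg.
have sc' : strong_clique e [set v; u] by rewrite setUC.
have vu : e v u by rewrite sym.
have disj : forall x, e u x -> e v x -> False.
  move=> x ux vx.
  have xv : x != v by apply/eqP => E; rewrite E irr in vx.
  have xu : x != u by apply/eqP => E; rewrite E irr in ux.
  by case/andP: (keyK sg sc ux xv vx xu); rewrite eqxx.
have Nu : forall x y, e u x -> e x y = e v y.
  by move=> x y ux; move/setP: (nbrL sg reg sc uv ux) => /(_ y); rewrite !inE.
have Nv : forall x y, e v x -> e x y = e u y.
  by move=> x y vx; move/setP: (nbrL sg reg sc' vu vx) => /(_ y); rewrite !inE.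
have cover : forall x, e u x || e v x.
  move=> x.
  have cl : closed e [pred z | e u z || e v z].
    have step : forall a b, e a b -> e u a || e v a -> e u b || e v b.
      move=> a b ab /orP[ua|va].
        by rewrite -(Nu a b ua) ab orbT.
      by rewrite -(Nv a b va) ab.
    move=> a b ab; apply/idP/idP; first exact: step.
    by apply: step; rewrite sym.
  have := closed_connect cl (con u x).
  by rewrite !inE vu orbT => <-.
move=> x y; case ux: (e u x).
  rewrite (Nu x y ux); case uy: (e u y) => /=.
    by apply/negbTE/negP => vy; apply: (disj y).
  by have := cover y; rewrite uy.
have vx : e v x by have := cover x; rewrite ux.
by rewrite (Nv x y vx); case: (e u y).
Qed.

Theorem mainTheorem11 (r : nat) (T : finType) (e : rel T) :
  0 < r -> simple_graph e -> connected_graph e -> regular e r ->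
  ((exists C : {set T}, strong_clique e C /\ #|C| = 2) <->
   graph_iso e (@Kbip_rel r)).
Proof.
move=> hr sg con reg; have [sym irr] := sg; split.
- move=> [C [sc /eqP/cards2P [u [v [uv EC]]]]].
  rewrite EC in sc.
  have euv : e u v.
    by case: sc => /forallP/(_ u)/implyP; rewrite !inE eqxx => /(_ isT)
      /forallP/(_ v)/implyP; rewrite !inE eqxx orbT => /(_ isT)/implyP/(_ uv).
  have st := @structure _ _ _ _ _ sg con reg sc euv.
  pose X := [set x | e u x].
  have hX : #|X| = r by rewrite reg.
  have CX : ~: X = [set x | e v x].
    by apply/setP => x; rewrite !inE (st v x) euv.
  have hY : #|~: X| = r by rewrite CX reg.
  have vX : v \in X by rewrite inE.
  have uY : u \in ~: X by rewrite !inE irr.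
  pose phi x := if x \in X then inl (cast_ord hX (enum_rank_in vX x))
                else inr (cast_ord hY (enum_rank_in uY x)) : 'I_r + 'I_r.
  have inj : injective phi.
    move=> x y; rewrite /phi.
    case xX: (x \in X); case yX: (y \in X) => // E.
    - have E' := cast_ord_inj (congr1 (fun z => if z is inl a then a else Ordinal hr) E).
      by rewrite -(enum_rankK_in vX xX) -(enum_rankK_in vX yX) E'.
    - have xY : x \in ~: X by rewrite inE xX.
      have yY : y \in ~: X by rewrite inE yX.
      have E' := cast_ord_inj (congr1 (fun z => if z is inr a then a else Ordinal hr) E).
      by rewrite -(enum_rankK_in uY xY) -(enum_rankK_in uY yY) E'.
  exists phi; split.
    apply: (inj_card_bij inj).
    by rewrite card_sum !card_ord -(cardsC X) hX hY.
  move=> x y; rewrite st /phi !inE.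
  by case: (e u x); case: (e u y).
- move=> [phi [[g phiK gK] Hphi]].
  pose side x := if phi x is inl _ then true else false.
  have es : forall x y, e x y = (side x != side y).
    by move=> x y; rewrite -Hphi /side; case: (phi x); case: (phi y).
  pose u := g (inl (Ordinal hr)); pose v := g (inr (Ordinal hr)).
  have su : side u = true by rewrite /side /u gK.
  have sv : side v = false by rewrite /side /v gK.
  have uv : u != v by apply/eqP => E; move: su; rewrite E sv.
  exists [set u; v]; split; last by rewrite cards2 uv.
  split.
    apply/forallP => a; apply/implyP => aC; apply/forallP => b; apply/implyP => bC.
    apply/implyP => ab; rewrite es.
    move: aC bC ab; rewrite !inE => /orP[]/eqP-> /orP[]/eqP->;
      by rewrite ?eqxx ?su ?sv.
  move=> I /maxsetP [indI maxI].
  have [I0|[x xI]] := set_0Vmem I.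
    have indu : independent e [set u].
      apply/forallP => a; apply/implyP; rewrite inE => /eqP->.
      apply/forallP => b; apply/implyP; rewrite inE => /eqP->.
      by rewrite irr.
    have := maxI _ indu; rewrite I0 sub0set => /(_ isT) /setP /(_ u).
    by rewrite !inE eqxx.
  have sameI : forall y, y \in I -> side y = side x.
    move=> y yI; have := indepP indI xI yI; rewrite es.
    by move/negbFE/eqP.
  pose w := if side x then u else v.
  have sw : side w = side x by rewrite /w; case: (side x).
  have indJ : independent e (w |: I).
    have sJ : forall y, y \in w |: I -> side y = side x.
      by move=> y; rewrite !inE => /orP[/eqP->//|]; apply: sameI.
    apply/forallP => a; apply/implyP => aJ; apply/forallP => b; apply/implyP => bJ.
    by rewrite es (sJ a aJ) (sJ b bJ) eqxx.
  have wI : w \in I.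
    have := maxI _ indJ (subsetUr _ _) => /setP /(_ w).
    by rewrite !inE eqxx /= => <-.
  apply/set0Pn; exists w; rewrite !inE wI andbT /w.
  by case: (side x); rewrite eqxx ?orbT.
Qed.
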